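(* Let $P\in\mathbb{C}(\mathbf{x})$, $\mathbf{x}=(x_1,\dots,x_n)$, be a rational function that is homogeneous of degree $d$ (for some integer $d$), and let $S\subseteq\mathbb{R}^n$ be a significant set. If $P(\mathbf{x})=0$ for all $\mathbf{x}\in S$, then $P$ is the zero function.
   Context: A function $f$ is homogeneous of degree $d\in\mathbb{Z}$ if $f(\lambda\mathbf{x})=\lambda^d f(\mathbf{x})$ for all $\lambda\in\mathbb{R}\setminus\{0\}$ and all $\mathbf{x}$ in its domain. A subset $S\subseteq\mathbb{R}^n$ is significant if $x_1\neq0$ for all $\mathbf{x}\in S$ and the set $\hat S=\{(x_2/x_1,\dots,x_n/x_1):\mathbf{x}\in S\}$ contains a nonempty open subset of $\mathbb{R}^{n-1}$. The hypothesis includes that $P$ is defined on $S$. *)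

(* Defs.v *)
From HB Require Import structures.
From mathcomp Require Import all_boot all_order all_algebra.
From mathcomp Require Import fraction.
From mathcomp Require Import complex.
From mathcomp Require Import reals.
From mathcomp Require Import mpoly.

Set Implicit Arguments.
Unset Strict Implicit.
Unset Printing Implicit Defensive.

Import Order.TTheory GRing.Theory Num.Theory.
Local Open Scope ring_scope.

Local Notation "x %:F" := (@FracField.tofrac _ x).

Section RatFun.
Variables (R : realType) (n : nat).

(* The field C(x_1,...,x_m) of rational functions in m = n.+1 variables. *)
Definition ratfun := {fraction {mpoly R[i][n.+1]}}.

(* [rf_value P z w] : P is defined at the point z of C^m and P(z) = w,
   i.e. P admits a representation p/q with q(z) <> 0 and p(z)/q(z) = w. *)
Definition rf_value (P : ratfun) (z : 'I_n.+1 -> R[i]) (w : R[i]) : Prop :=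
  exists (p q : {mpoly R[i][n.+1]}),
    [/\ q.@[z] != 0, P = p%:F / q%:F & w = p.@[z] / q.@[z]].

Definition rf_defined (P : ratfun) (z : 'I_n.+1 -> R[i]) : Prop :=
  exists w, rf_value P z w.

Definition rf_homogeneous (P : ratfun) (d : int) : Prop :=
  forall (l : R) (z : 'I_n.+1 -> R[i]) (w : R[i]), l != 0 ->
    rf_value P z w ->
    rf_value P (fun i => (l%:C)%C * z i) ((l%:C)%C ^ d * w).

Definition realpt (x : 'I_n.+1 -> R) : 'I_n.+1 -> R[i] := fun i => ((x i)%:C)%C.

(* S ⊆ R^m is significant: x_1 <> 0 on S, and
   hat S = {(x_2/x_1,...,x_m/x_1) : x in S} ⊆ R^n contains a nonempty open set,
   i.e. (standard topology of R^n) some open box around a point c. *)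
Definition significant (S : ('I_n.+1 -> R) -> Prop) : Prop :=
  (forall x, S x -> x ord0 != 0) /\
  exists (c : 'I_n -> R) (e : R), 0 < e /\
    forall y : 'I_n -> R, (forall j, `|y j - c j| < e) ->
      exists x, S x /\ forall j, y j = x (lift ord0 j) / x ord0.

End RatFun.

(* Main.v *)
Require Import Defs.
From HB Require Import structures.
From mathcomp Require Import all_boot all_order all_algebra.
From mathcomp Require Import fraction complex reals mpoly.
Import Order.TTheory GRing.Theory Num.Theory.
Local Open Scope ring_scope.
From mathcomp Require Import zify ring lra.

Local Open Scope nat_scope.
Lemma digits_inj k N (f g : 'I_k -> nat) :
  (forall i, f i < N) -> (forall i, g i < N) ->
  \sum_(i < k) f i * N ^ i = \sum_(i < k) g i * N ^ i -> f =1 g.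
Proof.
elim: k f g => [|k IH] f g hf hg.
  by move=> _ i; case: i.
rewrite !big_ord_recl /= !expn0 !muln1.
have E h : \sum_(i < k) h (lift ord0 i) * N ^ (bump 0 i) = N * \sum_(i < k) h (lift ord0 i) * N ^ i.
  rewrite big_distrr /=; apply: eq_bigr => i _; rewrite /bump /= add1n expnS; lia.
rewrite !E => eq.
have N0 : 0 < N by have := hf ord0; lia.
have e0 : f ord0 = g ord0.
  have := congr1 (modn^~ N) eq => /=.
  by rewrite ![_ + N * _]addnC ![N * _]mulnC !modnMDl !modn_small.
have e1 : \sum_(i < k) f (lift ord0 i) * N ^ i = \sum_(i < k) g (lift ord0 i) * N ^ i.
  by move: eq; rewrite e0 => /addnI /eqP; rewrite eqn_pmul2l // => /eqP.
have := IH _ _ (fun i => hf _) (fun i => hg _) e1.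
move=> H i; case: (unliftP ord0 i) => [j ->|->] //; exact: H.
Qed.

Local Open Scope ring_scope.
Section Kron.
Variable (K : idomainType) (k : nat).

Definition kexp (N : nat) (m : 'X_{1..k}) : nat := (\sum_(i < k) m i * N ^ i)%N.
Definition kron (p : {mpoly K[k]}) N : {poly K} :=
  \sum_(m <- msupp p) p@_m *: 'X^(kexp N m).

Lemma kron_horner p N t : (kron p N).[t] = p.@[fun i => t ^+ (N ^ i)].
Proof.
rewrite /kron mevalE horner_sum; apply: eq_bigr => m _.
rewrite hornerZ hornerXn; congr (_ * _).
rewrite /kexp -prodrXr; apply: eq_bigr => i _.
by rewrite -exprM mulnC.
Qed.

Lemma mnm_le_mdeg (m : 'X_{1..k}) j : (m j <= mdeg m)%N.
Proof. by rewrite mdegE (bigD1 j) //= leq_addr. Qed.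

Lemma kron_eq0 (p : {mpoly K[k]}) : kron p (msize p).+1 = 0 -> p = 0.
Proof.
move=> H; apply/mpolyP => m; rewrite mcoeff0.
case: (boolP (m \in msupp p)) => [hm|hm]; last exact: memN_msupp_eq0.
have := congr1 (fun f : {poly K} => f`_(kexp (msize p).+1 m)) H.
rewrite /kron coef_sumMXn coef0 big_mkcond (bigD1_seq m) //= eqxx /= big1_seq ?addr0 //.
move=> i /andP[ne hi]; case: eqP => // ee; exfalso; move/eqP: ne; apply.
apply/mnmP; move: ee; rewrite /kexp => ee; apply: (@digits_inj k (msize p).+1 (fun j => i j) (fun j => m j) _ _ ee) => j.
  by have := mnm_le_mdeg i j; have := msize_mdeg_lt hi; lia.
by have := mnm_le_mdeg m j; have := msize_mdeg_lt hm; lia.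
Qed.

Lemma poly_roots_inf (f : {poly K}) (s : nat -> K) :
  injective s -> (forall j, f.[s j] = 0) -> f = 0.
Proof.
move=> si hf; apply: (@roots_geq_poly_eq0 _ f [seq s j | j <- iota 0 (size f)]).
- by apply/allP => x /mapP[j _ ->]; apply/eqP/hf.
- by rewrite map_inj_uniq ?iota_uniq.
- by rewrite size_map size_iota.
Qed.

Lemma vanish_eq0 (p : {mpoly K[k]}) (s : nat -> K) : injective s ->
  (forall j (N : nat), (0 < N)%N -> p.@[fun i => s j ^+ (N ^ i)%N] = 0) -> p = 0.
Proof.
move=> si h; apply: kron_eq0; apply: (@poly_roots_inf _ s si) => j.
by rewrite kron_horner h.
Qed.

End Kron.

Section Cone.
Variables (R : realType) (n : nat).
Local Notation C := (R[i]).

Definition Lf (c : 'I_n -> R) (i : 'I_n.+1) : {mpoly C[n.+1]} :=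
  if unlift ord0 i is Some j then ((c j)%:C)%C%:MP * ('X_ord0 + 1) + 'X_i
  else 'X_ord0 + 1.

Lemma Lf_eval c i (w : 'I_n.+1 -> C) : (Lf c i).@[w] =
  if unlift ord0 i is Some j then ((c j)%:C)%C * (w ord0 + 1) + w i
  else w ord0 + 1.
Proof.
rewrite /Lf; case: (unlift ord0 i) => [j|].
  by rewrite mevalD mevalM mevalC mevalD mevalXU meval1 mevalXU.
by rewrite mevalD mevalXU meval1.
Qed.

Lemma cone_eq0 (p : {mpoly C[n.+1]}) (c : 'I_n -> R) (e : R) : 0 < e ->
  (forall z : 'I_n.+1 -> R, z ord0 != 0 ->
     (forall j, `|z (lift ord0 j) / z ord0 - c j| < e) ->
     p.@[fun i => ((z i)%:C)%C] = 0) -> p = 0.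
Proof.
move=> e0 hp.
pose mu : R := Num.min 1 e.
have mu0 : 0 < mu by rewrite lt_min ltr01 e0.
have mu1 : mu <= 1 by rewrite ge_min lexx.
have mue : mu <= e by rewrite ge_min lexx orbT.
pose s (j : nat) : C := ((mu / (j.+2)%:R)%:C)%C.
have s_inj : injective s.
  move=> a b /complexI /(mulfI (lt0r_neq0 mu0)) /invr_inj /eqP.
  by rewrite eqr_nat => /eqP [].
pose lq := [tuple Lf c i | i < n.+1].
pose q := p \mPo lq.
have qE w : q.@[w] = p.@[fun i => (Lf c i).@[w]].
  by rewrite comp_mpoly_meval; apply: meval_eq => i; rewrite tnth_mktuple.
have q0 : q = 0.
  apply: (@vanish_eq0 _ _ _ s s_inj) => j N N0.
  rewrite qE.
  have [t t0 [tmu st]] : exists2 t : R, 0 < t & t < mu /\ s j = (t%:C)%C.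
    exists (mu / (j.+2)%:R); first by rewrite divr_gt0 // ltr0n.
    by split=> //; rewrite ltr_pdivrMr ?ltr0n // ltr_pMr // ltr1n.
  have tle (m : nat) : (0 < m)%N -> t ^+ m <= t.
    case: m => // m _; rewrite exprS ler_piMr ?(ltW t0) //.
    by rewrite exprn_ile1 ?(ltW t0) // ltW // (lt_le_trans tmu mu1).
  pose z (i : 'I_n.+1) : R := if unlift ord0 i is Some j' then c j' * (t + 1) + t ^+ (N ^ i)%N else t + 1.
  have z0 : z ord0 = t + 1 by rewrite /z unlift_none.
  transitivity (p.@[fun i => ((z i)%:C)%C]); last apply: hp.
  - apply: meval_eq => i; rewrite Lf_eval /z st.
    case: (unlift ord0 i) => [j'|] /=; rewrite ?expn0 ?expr1 ?(rmorphD, rmorphM, rmorphXn, rmorph1) //.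
  - by rewrite z0 gt_eqF // ltr_wpDl // ltW.
  move=> j'; rewrite z0 /z liftK.
  have t1 : t + 1 != 0 by rewrite gt_eqF // ltr_wpDl // ltW.
  have -> : (c j' * (t + 1) + t ^+ (N ^ lift ord0 j')%N) / (t + 1) - c j' = t ^+ (N ^ lift ord0 j')%N / (t + 1).
    by field.
  rewrite ger0_norm; last by rewrite divr_ge0 // ?exprn_ge0 ?ltW // ?ltr_wpDl // ltW.
  apply: (le_lt_trans _ (lt_le_trans tmu mue)).
  rewrite ler_pdivrMr; last by rewrite ltr_wpDl // ltW.
  apply: (le_trans (tle _ _)); first by rewrite expn_gt0 N0.
  rewrite ler_peMr ?(ltW t0) //; lra.
have pv v : p.@[v] = 0.
  pose w i := if unlift ord0 i is Some j then v i - ((c j)%:C)%C * v ord0 else v ord0 - 1.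
  have := qE w; rewrite q0 meval0 => ->; apply: meval_eq => i.
  rewrite Lf_eval /w; case: (unliftP ord0 i) => [j ->|->].
    rewrite unlift_none; ring.
  idtac.
  by rewrite unlift_none; ring.
by apply: (@vanish_eq0 _ _ _ s s_inj) => j N _; rewrite pv.
Qed.
End Cone.

Local Notation "x %:F" := (@FracField.tofrac _ x).

Theorem lemma2 (R : realType) (n : nat) (P : ratfun R n) (d : int)
    (S : ('I_n.+1 -> R) -> Prop) :
  rf_homogeneous P d ->
  significant S ->
  (forall x, S x -> rf_value P (realpt x) 0) ->
  P = 0.
Proof.
move=> hom [hS0 [c [e [e0 hbox]]]] hval.
have [x0 [Sx0 _]] := hbox c (fun j => ltac:(by rewrite subrr normr0)).
have [p [q [qz PE _]]] := hval _ Sx0.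
have q0 : q != 0 by apply: contraNneq qz => ->; rewrite meval0.
have key z : rf_value P z 0 -> p.@[z] = 0.
  case=> p' [q' [q'z PE' w0]].
  have q'0 : q' != 0 by apply: contraNneq q'z => ->; rewrite meval0.
  have : p%:F / q%:F == p'%:F / q'%:F by rewrite -PE -PE'.
  rewrite eqr_div ?tofrac_eq0 // -!tofracM tofrac_eq => /eqP /(congr1 (meval z)).
  rewrite !mevalM.
  have -> : p'.@[z] = 0.
    by move/esym/eqP: w0; rewrite mulf_eq0 invr_eq0 (negbTE q'z) orbF => /eqP.
  by rewrite mul0r => /eqP; rewrite mulf_eq0 (negbTE q'z) orbF => /eqP.
have p0 : p = 0.
  apply: (@cone_eq0 R n p c e e0) => z z0 hz.
  have [x [Sx hy]] := hbox (fun j => z (lift ord0 j) / z ord0) hz.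
  have x00 := hS0 _ Sx.
  pose l := z ord0 / x ord0.
  have l0 : l != 0 by rewrite /l mulf_neq0 // invr_eq0.
  have := hom l _ _ l0 (hval _ Sx); rewrite mulr0 => /key <-.
  apply: meval_eq => i; rewrite /realpt -rmorphM; congr (_%:C)%C.
  rewrite /l; case: (unliftP ord0 i) => [j ->|->].
    have := hy j => hyj.
    rewrite -[LHS](divfK z0) hyj mulrAC [RHS]mulrAC; congr (_ * _); exact: mulrC.
  by rewrite divfK.
by rewrite PE p0 tofrac0 mul0r.
Qed.
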